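(* Let $X$, $Y$ be disjoint sets of cardinality at least two, and let $M\le\mathrm{Sym}(X)$ and $N\le\mathrm{Sym}(Y)$ be nontrivial permutation groups. Then $M\boxtimes N$ is discrete (in the permutation topology of $\mathrm{Sym}(V_Y)$) if and only if $M$ and $N$ are semi-regular.
   Context: A permutation group is semi-regular if every point stabiliser is trivial. A group $G\le\mathrm{Sym}(V)$ is discrete in the permutation topology (pointwise convergence) iff the pointwise stabiliser in $G$ of some finite subset of $V$ is trivial. Let $T$ be the $(|X|,|Y|)$-biregular tree with natural bipartition $VT=V_X\sqcup V_Y$ (vertices in $V_X$ have valency $|X|$, in $V_Y$ valency $|Y|$). $A(v)$, $\overline{A}(v)$ are the sets of arcs with origin, resp. terminus, $v$. A legal colouring is a map $c:AT\to X\cup Y$ restricting to a bijection $A(v)\to X$ for $v\in V_X$, to a bijection $A(v)\to Y$ for $v\in V_Y$, and constant on each $\overline{A}(v)$. $U_c(M,N)$ is the group of $g\in\mathrm{Aut}(T)$ with $gV_X=V_X$ and $c|_{A(gv)}\circ g|_{A(v)}\circ(c|_{A(v)})^{-1}$ in $M$ for $v\in V_X$ and in $N$ for $v\in V_Y$. The box product $M\boxtimes N\le\mathrm{Sym}(V_Y)$ is the group induced on $V_Y$ by $U_c(M,N)$. *)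

(* Defs.v *)
From Stdlib Require Import List.
Import ListNotations.
Set Implicit Arguments.

Definition perm_group (X : Type) (M : (X -> X) -> Prop) : Prop :=
  M (fun x => x) /\
  (forall m m', M m -> M m' -> M (fun x => m (m' x))) /\
  (forall m, M m -> exists m', M m' /\
       (forall x, m (m' x) = x) /\ (forall x, m' (m x) = x)).

Definition nontrivial_group (X : Type) (M : (X -> X) -> Prop) : Prop :=
  exists m, M m /\ exists x, m x <> x.

Definition semi_regular (X : Type) (M : (X -> X) -> Prop) : Prop :=
  forall m x, M m -> m x = x -> forall y, m y = y.

(* A group G <= Sym(D) is discrete in the permutation topology iff the
   pointwise stabiliser in G of some finite subset F of D is trivial. *)
Definition discrete_perm_group (D : Type) (G : (D -> D) -> Prop) : Prop :=
  exists F : list D, forall h, G h -> (forall d, In d F -> h d = d) ->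
                                 forall d, h d = d.

(* walk E u l w : u = v0, l = [v1; ...; vn], vn = w, consecutive vertices adjacent *)
Inductive walk (V : Type) (E : V -> V -> Prop) : V -> list V -> V -> Prop :=
| walk_nil v : walk E v [] v
| walk_cons u v l w : E u v -> walk E v l w -> walk E u (v :: l) w.

Fixpoint reduced (V : Type) (s : list V) : Prop :=
  match s with
  | a :: ((_ :: c :: _) as t) => a <> c /\ reduced t
  | _ => True
  end.

Definition is_tree (V : Type) (E : V -> V -> Prop) : Prop :=
  (forall u v, E u v -> E v u) /\
  (forall v, ~ E v v) /\
  inhabited V /\
  (forall u v, exists l, walk E u l v) /\
  (forall v l, walk E v l v -> reduced (v :: l) -> l = []).

(* (|X|,|Y|)-biregular tree with natural bipartition V = V_X (isX) |_| V_Y (~ isX):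
   edges join V_X and V_Y, vertices of V_X have valency |X|, those of V_Y valency |Y|. *)
Definition biregular_tree (X Y V : Type) (E : V -> V -> Prop) (isX : V -> Prop)
  : Prop :=
  is_tree E /\
  (forall u v, E u v -> (isX u <-> ~ isX v)) /\
  (forall v, isX v -> exists f : X -> V,
       (forall x, E v (f x)) /\ (forall x x', f x = f x' -> x = x') /\
       (forall w, E v w -> exists x, f x = w)) /\
  (forall v, ~ isX v -> exists f : Y -> V,
       (forall y, E v (f y)) /\ (forall y y', f y = f y' -> y = y') /\
       (forall w, E v w -> exists y, f y = w)).

(* Arcs are ordered pairs (u,w) with E u w; A(v) = arcs with origin v,
   \bar A(v) = arcs with terminus v. Colours live in the disjoint union X + Y.
   c is a legal colouring: c|A(v) is a bijection onto X (v in V_X), resp. onto Y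
   (v in V_Y), and c is constant on each \bar A(v). *)
Definition legal_colouring (X Y V : Type) (E : V -> V -> Prop) (isX : V -> Prop)
  (c : V -> V -> X + Y) : Prop :=
  (forall v, isX v ->
     (forall w, E v w -> exists x, c v w = inl x) /\
     (forall w w', E v w -> E v w' -> c v w = c v w' -> w = w') /\
     (forall x, exists w, E v w /\ c v w = inl x)) /\
  (forall v, ~ isX v ->
     (forall w, E v w -> exists y, c v w = inr y) /\
     (forall w w', E v w -> E v w' -> c v w = c v w' -> w = w') /\
     (forall y, exists w, E v w /\ c v w = inr y)) /\
  (forall u u' v, E u v -> E u' v -> c u v = c u' v).

Definition tree_aut (V : Type) (E : V -> V -> Prop) (g : V -> V) : Prop :=
  (forall u v, g u = g v -> u = v) /\ (forall v, exists u, g u = v) /\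
  (forall u v, E u v <-> E (g u) (g v)).

(* U_c(M,N): automorphisms g with g V_X = V_X such that the local action
   c|A(gv) o g|A(v) o (c|A(v))^{-1} lies in M (v in V_X), resp. N (v in V_Y). *)
Definition U_c (X Y V : Type) (E : V -> V -> Prop) (isX : V -> Prop)
  (c : V -> V -> X + Y) (M : (X -> X) -> Prop) (N : (Y -> Y) -> Prop)
  (g : V -> V) : Prop :=
  tree_aut E g /\
  (forall v, isX (g v) <-> isX v) /\
  (forall v, isX v -> exists m, M m /\
     forall w x, E v w -> c v w = inl x -> c (g v) (g w) = inl (m x)) /\
  (forall v, ~ isX v -> exists n, N n /\
     forall w y, E v w -> c v w = inr y -> c (g v) (g w) = inr (n y)).

Definition VY (V : Type) (isX : V -> Prop) : Type := {v : V | ~ isX v}.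

Definition box_product (X Y V : Type) (E : V -> V -> Prop) (isX : V -> Prop)
  (c : V -> V -> X + Y) (M : (X -> X) -> Prop) (N : (Y -> Y) -> Prop)
  (h : VY isX -> VY isX) : Prop :=
  exists g, U_c E isX c M N g /\ forall v : VY isX, proj1_sig (h v) = g (proj1_sig v).

(* Main.v *)
Require Import Defs.
From Stdlib Require Import List Lia Classical ClassicalEpsilon ProofIrrelevance.
Import ListNotations.
Set Implicit Arguments.

Lemma last_cons (A : Type) (x : A) l d : last (x :: l) d = last l x.
Proof.
  assert (Hi : forall (x : A) l d d', last (x :: l) d = last (x :: l) d').
  { intros x0 l0; revert x0; induction l0 as [|y l0 IH]; intros; simpl; auto.
    apply IH. }
  destruct l as [|y l]; simpl; auto. apply Hi. Qed.

Lemma red_cons_iff (A : Type) (a : A) l : reduced (a :: l) <->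
  reduced l /\ (match l with _ :: c :: _ => a <> c | _ => True end).
Proof. destruct l as [|b [|c l]]; simpl; tauto. Qed.

Lemma red_app (A : Type) (s : list A) x y t :
  reduced (s ++ [x;y]) -> reduced (x :: y :: t) -> reduced (s ++ x :: y :: t).
Proof.
  induction s as [|a s IH]; intros H1 H2; [simpl in *; auto|].
  rewrite <- !app_comm_cons in *.
  rewrite red_cons_iff in H1 |- *. destruct H1 as [H1 H3]. split; auto.
  destruct s as [|b [|c s]]; simpl in *; auto.
Qed.

Lemma red_suffix (A : Type) (s t : list A) : reduced (s ++ t) -> reduced t.
Proof. induction s as [|a s IH]; [simpl; auto|]. rewrite <- app_comm_cons, red_cons_iff; tauto. Qed.

Lemma red_prefix (A : Type) (s t : list A) : reduced (s ++ t) -> reduced s.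
Proof. induction s as [|a s IH]; [simpl; auto|]. rewrite <- app_comm_cons, !red_cons_iff.
  intros [H1 H2]; split; auto. destruct s as [|b [|c s]]; simpl in *; auto. Qed.

Lemma red_rev (A : Type) (l : list A) : reduced l -> reduced (rev l).
Proof.
  induction l as [|a l IH]; [simpl; auto|]. intros H.
  rewrite red_cons_iff in H. destruct H as [Hl Hm]. specialize (IH Hl).
  destruct l as [|b [|c l]]; [simpl; auto|simpl; auto|].
  change (rev (a :: b :: c :: l)) with (((rev l ++ [c]) ++ [b]) ++ [a]).
  change (rev (b :: c :: l)) with ((rev l ++ [c]) ++ [b]) in IH.
  rewrite <- !app_assoc in *; simpl in *.
  apply red_app; auto. simpl. split; auto.
Qed.

Lemma red_3 (A : Type) (s : list A) a b c : reduced (s ++ [a;b;c]) -> a <> c.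
Proof. intros H. apply red_suffix in H. simpl in H. tauto. Qed.

Section Walks.
Variable V : Type.
Variable E : V -> V -> Prop.

Lemma walk_app a l b l' c : walk E a l b -> walk E b l' c -> walk E a (l ++ l') c.
Proof. intros H; induction H; simpl; intros; auto. econstructor; eauto. Qed.

Lemma walk_last a l b : walk E a l b -> last l a = b.
Proof. intros H; induction H; [reflexivity|]. rewrite last_cons; auto. Qed.

Lemma walk_split l l' a b : walk E a (l ++ l') b ->
  walk E a l (last l a) /\ walk E (last l a) l' b.
Proof.
  revert a; induction l as [|x l IH]; intros a H.
  - simpl in *. split; auto. constructor.
  - rewrite <- app_comm_cons in H. inversion H as [|? ? ? ? Hax Hw]; subst. destruct (IH _ Hw) as [H1 H2].
    rewrite last_cons. split; auto. econstructor; eauto.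
Qed.

Hypothesis Esym : forall u v, E u v -> E v u.

Lemma walk_rev a l b : walk E a l b -> exists k, rev (a :: l) = b :: k /\ walk E b k a.
Proof.
  intros H; induction H.
  - exists []; split; [reflexivity| constructor].
  - destruct IHwalk as [k [Hk Wk]].
    exists (k ++ [u]). split.
    + change (rev (u :: v :: l)) with (rev (v :: l) ++ [u]). rewrite Hk. reflexivity.
    + apply walk_app with v; auto. econstructor; eauto. constructor.
Qed.

Hypothesis Eacyc : forall v l, walk E v l v -> reduced (v :: l) -> l = [].

Definition RW a l b := walk E a l b /\ reduced (a :: l).

Lemma RW_uniq l : forall a l' b, RW a l b -> RW a l' b -> l = l'.
Proof.
  induction l as [|x l IH]; intros a l' b [W R] [W' R'].
  - inversion W; subst. symmetry; eapply Eacyc; eauto.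
  - destruct l' as [|x' l'].
    + inversion W'; subst. exfalso. pose proof (Eacyc W R). discriminate.
    + inversion W; subst. inversion W'; subst.
      destruct (classic (x = x')) as [Hx|Hx].
      * subst. f_equal. apply IH with x' b; split; auto;
        [rewrite red_cons_iff in R | rewrite red_cons_iff in R']; tauto.
      * exfalso. destruct (walk_rev W) as [k [Hk Wk]].
        assert (Wc : walk E b (k ++ x' :: l') b) by (eapply walk_app; eauto).
        assert (Rc : reduced (b :: k ++ x' :: l')).
        { change (b :: k ++ x' :: l') with ((b :: k) ++ x' :: l'). rewrite <- Hk.
          assert (Hr : rev (a :: x :: l) = rev l ++ [x; a])
            by (simpl; rewrite <- app_assoc; reflexivity).
          rewrite Hr, <- app_assoc. simpl. apply red_app.
          - rewrite <- Hr. apply red_rev; auto.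
          - rewrite red_cons_iff. split; auto. }
        pose proof (Eacyc Wc Rc) as Hn. destruct k; discriminate.
Qed.

Lemma RW_exists a l b : walk E a l b -> exists l', RW a l' b.
Proof.
  intros H; induction H.
  - exists []; split; [constructor| simpl; auto].
  - destruct IHwalk as [l' [W R]]. destruct l' as [|y l''].
    + inversion W; subst. exists [w]; split; [econstructor; eauto; constructor| simpl; auto].
    + destruct (classic (y = u)) as [Hy|Hy].
      * subst. inversion W; subst. exists l''. split; auto.
        rewrite red_cons_iff in R; tauto.
      * exists (v :: y :: l''). split; [econstructor; eauto|].
        rewrite red_cons_iff. split; auto.
Qed.

Lemma common_nb b1 b2 a a' : b1 <> b2 -> E b1 a -> E a b2 -> E b1 a' -> E a' b2 -> a = a'.
Proof.
  intros Hb H1 H2 H3 H4. destruct (classic (a = a')) as [|Ha]; auto. exfalso.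
  assert (W : walk E b1 [a; b2; a'; b1] b1).
  { repeat (econstructor; eauto). }
  assert (R : reduced (b1 :: [a; b2; a'; b1])) by (simpl; repeat split; auto).
  pose proof (Eacyc W R). discriminate.
Qed.

End Walks.


Section Paths.
Variable V : Type.
Variable E : V -> V -> Prop.
Hypothesis Esym : forall u v, E u v -> E v u.
Hypothesis Econn : forall u v, exists l, walk E u l v.
Hypothesis Eacyc : forall v l, walk E v l v -> reduced (v :: l) -> l = [].

Definition lp (r d : V) : list V := epsilon (inhabits nil) (fun l => RW E r l d).

Lemma lp_spec r d : RW E r (lp r d) d.
Proof. unfold lp. apply epsilon_spec. destruct (Econn r d) as [l W].
  eapply RW_exists; eauto. Qed.

Lemma lp_eq r l d : RW E r l d -> lp r d = l.
Proof. intros H. eapply RW_uniq; eauto. apply lp_spec. Qed.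

Lemma lp_root r : lp r r = [].
Proof. apply lp_eq. split; [constructor| simpl; auto]. Qed.

Lemma lp_last r d : last (lp r d) r = d.
Proof. apply walk_last with E. apply lp_spec. Qed.

Lemma lp_nil r d : lp r d = [] -> d = r.
Proof. intros H. pose proof (lp_last r d) as H1. rewrite H in H1. simpl in H1. auto. Qed.

Definition Par r p d := lp r d = lp r p ++ [d].

Lemma Par_E r p d : Par r p d -> E p d.
Proof. unfold Par; intros H. pose proof (lp_spec r d) as [W _]. rewrite H in W.
  apply walk_split in W. destruct W as [_ W]. rewrite lp_last in W.
  inversion W; subst; auto. Qed.

Lemma Par_neq_root r p d : Par r p d -> d <> r.
Proof. unfold Par; intros H Hd; subst. rewrite lp_root in H.
  destruct (lp r p); discriminate. Qed.

Lemma Par_len r p d : Par r p d -> length (lp r p) < length (lp r d).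
Proof. unfold Par; intros H; rewrite H, length_app; simpl; lia. Qed.

Lemma Par_uniq r p p' d : Par r p d -> Par r p' d -> p = p'.
Proof. unfold Par; intros H H'. rewrite H in H'. apply app_inj_tail in H'.
  destruct H' as [H' _]. rewrite <- (lp_last r p), <- (lp_last r p'), H'. auto. Qed.

Lemma Par_root r d : E r d -> Par r r d.
Proof. intros H. unfold Par. rewrite lp_root. simpl. apply lp_eq.
  split; [econstructor; eauto; constructor | simpl; auto]. Qed.

Lemma Par_exists r d : d <> r -> exists p, Par r p d.
Proof.
  intros Hd. destruct (lp r d) as [|x l] eqn:Hl.
  { apply lp_nil in Hl. contradiction. }
  assert (Hne : x :: l <> []) by discriminate.
  destruct (exists_last Hne) as [l0 [y Hy]].
  pose proof (lp_spec r d) as [W R]. rewrite Hl, Hy in W, R.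
  apply walk_split in W. destruct W as [W1 W2].
  inversion W2; subst. inversion H4; subst.
  exists (last l0 r). unfold Par. rewrite Hl, Hy. f_equal. symmetry. apply lp_eq.
  split; auto. change (r :: l0 ++ [d]) with ((r :: l0) ++ [d]) in R.
  eapply red_prefix; eauto.
Qed.

Lemma red_lp_snoc r p : exists s, r :: lp r p = s ++ [p].
Proof. exists (removelast (r :: lp r p)).
  rewrite (@app_removelast_last _ (r :: lp r p) r) at 1 by discriminate.
  f_equal. rewrite last_cons. rewrite lp_last. auto. Qed.

Lemma Par_ext r pp p d : Par r pp p -> E p d -> d <> pp -> Par r p d.
Proof.
  intros Hp He Hd. unfold Par. apply lp_eq. split.
  - apply walk_app with p. exact (proj1 (lp_spec r p)).
    econstructor; eauto; constructor.
  - pose proof (lp_spec r p) as [_ R]. unfold Par in Hp. rewrite Hp in *.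
    destruct (red_lp_snoc r pp) as [s Hs].
    change (r :: (lp r pp ++ [p]) ++ [d]) with (((r :: lp r pp) ++ [p]) ++ [d]).
    change (r :: lp r pp ++ [p]) with ((r :: lp r pp) ++ [p]) in R.
    rewrite Hs in *. rewrite <- !app_assoc in *. simpl in *.
    apply red_app; auto. simpl. auto.
Qed.

Lemma Par_Par_neq r pp p d : Par r pp p -> Par r p d -> d <> pp.
Proof.
  intros H1 H2. pose proof (lp_spec r d) as [_ R]. unfold Par in *.
  rewrite H2, H1 in R. destruct (red_lp_snoc r pp) as [s Hs].
  change (r :: (lp r pp ++ [p]) ++ [d]) with (((r :: lp r pp) ++ [p]) ++ [d]) in R.
  rewrite Hs in R. rewrite <- !app_assoc in R. simpl in R.
  intro; subst. eapply red_3 in R. apply R; auto.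
Qed.

Lemma N1 r a b : E a b -> Par r a b \/ Par r b a.
Proof.
  intros H. destruct (classic (a = r)) as [Ha|Ha].
  - subst. left. apply Par_root; auto.
  - destruct (Par_exists Ha) as [pa Hpa].
    destruct (classic (b = pa)) as [Hb|Hb].
    + subst. right; auto.
    + left. eapply Par_ext; eauto.
Qed.

Definition Anc r a b := exists e, lp r b = lp r a ++ e.

Lemma Anc_trans r a b c : Anc r a b -> Anc r b c -> Anc r a c.
Proof. intros [e1 H1] [e2 H2]. exists (e1 ++ e2). rewrite H2, H1, app_assoc; auto. Qed.

Lemma Par_Anc r a b : Par r a b -> Anc r a b.
Proof. intros H; exists [b]; auto. Qed.

Lemma Anc_refl r a : Anc r a a.
Proof. exists []; rewrite app_nil_r; auto. Qed.

Lemma anc_aux r t l : forall a b, Par r a b -> walk E b l t -> reduced (a :: b :: l) -> Anc r b t.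
Proof.
  induction l as [|x l IH]; intros a b Hp W R.
  - inversion W; subst. apply Anc_refl.
  - inversion W; subst. rewrite red_cons_iff in R. destruct R as [R Hax].
    assert (Hbx : Par r b x) by (eapply Par_ext; eauto).
    apply Anc_trans with x. apply Par_Anc; auto. eapply IH; eauto.
Qed.

Lemma K r u v t : Par r u v -> ~ Anc r v t -> exists rest, lp v t = u :: rest.
Proof.
  intros Hp Hn. pose proof (lp_spec v t) as [W R].
  destruct (lp v t) as [|w rest] eqn:Hl.
  - inversion W; subst. exfalso; apply Hn, Anc_refl.
  - destruct (classic (w = u)) as [Hw|Hw]; [subst; eauto|].
    exfalso. inversion W; subst.
    assert (Hvw : Par r v w) by (eapply Par_ext; eauto).
    apply Hn. apply Anc_trans with w. apply Par_Anc; auto.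
    eapply anc_aux; eauto.
Qed.

Lemma len_ind r (P : V -> Prop) :
  (forall d, (forall d', length (lp r d') < length (lp r d) -> P d') -> P d) ->
  forall d, P d.
Proof.
  intros H. assert (forall n d, length (lp r d) <= n -> P d).
  { induction n; intros d Hd; apply H; intros d' Hd'; [lia|]. apply IHn; lia. }
  intros d; eapply H0; eauto.
Qed.

End Paths.


Definition T (X Y : Type) (t : X -> X) (z : X + Y) : X + Y :=
  match z with inl x => inl (t x) | inr y => inr y end.

Lemma T_inj (X Y : Type) (t : X -> X) (z1 z2 : X + Y) :
  (forall a b, t a = t b -> a = b) -> T t z1 = T t z2 -> z1 = z2.
Proof. intros Ht; destruct z1, z2; simpl; intros H; inversion H; f_equal; auto. Qed.

Lemma T_id (X Y : Type) (z : X + Y) : T (fun x => x) z = z.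
Proof. destruct z; reflexivity. Qed.

Section Col.
Variables X Y V : Type.
Variable E : V -> V -> Prop.
Variable isX : V -> Prop.
Variable c : V -> V -> X + Y.
Hypothesis Esym : forall u v, E u v -> E v u.
Hypothesis Econn : forall u v, exists l, walk E u l v.
Hypothesis Eacyc : forall v l, walk E v l v -> reduced (v :: l) -> l = [].
Hypothesis Hbip : forall u w, E u w -> (isX u <-> ~ isX w).
Hypothesis Hc : legal_colouring E isX c.

Lemma colX a w : isX a -> E a w -> exists x, c a w = inl x.
Proof. intros Ha Hw; destruct Hc as [HX _]; apply (proj1 (HX a Ha)); auto. Qed.
Lemma colY a w : ~ isX a -> E a w -> exists y, c a w = inr y.
Proof. intros Ha Hw; destruct Hc as [_ [HY _]]; apply (proj1 (HY a Ha)); auto. Qed.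
Lemma col_inj a w w' : E a w -> E a w' -> c a w = c a w' -> w = w'.
Proof. intros Hw Hw' Hcc. destruct Hc as [HX [HY _]]. destruct (classic (isX a)) as [Ha|Ha].
  - eapply (proj1 (proj2 (HX a Ha))); eauto.
  - eapply (proj1 (proj2 (HY a Ha))); eauto. Qed.
Lemma col_surjX a x : isX a -> exists w, E a w /\ c a w = inl x.
Proof. intros Ha; destruct Hc as [HX _]; apply (proj2 (proj2 (HX a Ha))). Qed.
Lemma col_surjY a y : ~ isX a -> exists w, E a w /\ c a w = inr y.
Proof. intros Ha; destruct Hc as [_ [HY _]]; apply (proj2 (proj2 (HY a Ha))). Qed.
Lemma col_const u u' a : E u a -> E u' a -> c u a = c u' a.
Proof. intros H1 H2; destruct Hc as [_ [_ HK]]; eauto. Qed.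

Lemma side_step a b a' b' : E a b -> E a' b' -> (isX a <-> isX a') -> (isX b <-> isX b').
Proof. intros H1 H2 H3. pose proof (Hbip H1). pose proof (Hbip H2).
  destruct (classic (isX b)), (classic (isX b')); tauto. Qed.

Definition sel (a : V) (l : X + Y) : V := epsilon (inhabits a) (fun w => E a w /\ c a w = l).

Lemma sel_spec a l : (exists w, E a w /\ c a w = l) -> E a (sel a l) /\ c a (sel a l) = l.
Proof. intros H. unfold sel. apply epsilon_spec. auto. Qed.

Lemma sel_self a b : E a b -> sel a (c a b) = b.
Proof. intros H. destruct (@sel_spec a (c a b)) as [H1 H2]; eauto.
  eapply col_inj; eauto. Qed.

Lemma sel_ex (t : X -> X) a b a' : E a b -> (isX a <-> isX a') ->
  exists w, E a' w /\ c a' w = T t (c a b).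
Proof. intros H Hs. destruct (classic (isX a)) as [Ha|Ha].
  - destruct (colX Ha H) as [x Hx]. rewrite Hx. simpl. apply col_surjX. tauto.
  - destruct (colY Ha H) as [y Hy]. rewrite Hy. simpl. apply col_surjY. tauto. Qed.

Definition Inv (t : X -> X) p a p' a' :=
  E p a /\ E p' a' /\ (isX a <-> isX a') /\ c a' p' = T t (c a p) /\ c p' a' = T t (c p a).

Lemma step (t : X -> X) p a p' a' b : (forall x y, t x = t y -> x = y) ->
  Inv t p a p' a' -> E a b -> b <> p ->
  Inv t a b a' (sel a' (T t (c a b))) /\ sel a' (T t (c a b)) <> p'.
Proof.
  intros Ht [H1 [H2 [H3 [H4 H5]]]] Hab Hbp.
  destruct (@sel_spec a' (T t (c a b))) as [S1 S2]. { eapply sel_ex; eauto. }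
  split.
  - split; [auto| split; [auto| split; [| split]]].
    + eapply side_step; eauto.
    + rewrite (@col_const _ p' a'); auto. rewrite H5. f_equal. apply col_const; auto.
    + auto.
  - intros Heq. rewrite Heq in S2. rewrite H4 in S2. apply T_inj in S2; auto.
    apply col_inj in S2; auto.
Qed.

End Col.


Fixpoint follow (X Y V : Type) (E : V -> V -> Prop) (c : V -> V -> X + Y)
  (t : X -> X) (a' a : V) (l : list V) : list V :=
  match l with
  | [] => []
  | b :: l0 => let b' := sel E c a' (T t (c a b)) in b' :: follow E c t b' b l0
  end.

Lemma follow_snoc (X Y V : Type) (E : V -> V -> Prop) (c : V -> V -> X + Y) t l :
  forall a' a d, follow E c t a' a (l ++ [d]) =
   follow E c t a' a l ++ [sel E c (last (follow E c t a' a l) a') (T t (c (last l a) d))].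
Proof.
  induction l as [|b l IH]; intros a' a d; [reflexivity|].
  rewrite <- app_comm_cons. cbn [follow]. rewrite IH, !last_cons. reflexivity.
Qed.

Section Constr.
Variables X Y V : Type.
Variable E : V -> V -> Prop.
Variable isX : V -> Prop.
Variable c : V -> V -> X + Y.
Hypothesis Esym : forall u v, E u v -> E v u.
Hypothesis Econn : forall u v, exists l, walk E u l v.
Hypothesis Eacyc : forall v l, walk E v l v -> reduced (v :: l) -> l = [].
Hypothesis Hbip : forall u w, E u w -> (isX u <-> ~ isX w).
Hypothesis Hc : legal_colouring E isX c.
Variable r : V.
Hypothesis Hr : isX r.
Variable m : X -> X.
Hypothesis Hm : forall x y, m x = m y -> x = y.

Definition fixb (w : V) : Prop := c r w = T m (c r w).
Definition tau (w : V) : X -> X :=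
  if excluded_middle_informative (fixb w) then (fun x => x) else m.

Definition imgl (l : list V) : list V :=
  match l with
  | [] => []
  | w :: l0 => let w' := sel E c r (T (tau w) (c r w)) in w' :: follow E c (tau w) w' w l0
  end.

Definition G (d : V) : V := last (imgl (lp E r d)) r.
Definition br (d : V) : V := hd d (lp E r d).

Lemma tau_inj w : forall x y, tau w x = tau w y -> x = y.
Proof. unfold tau; destruct excluded_middle_informative; auto. Qed.

Lemma imgl_snoc l d : imgl (l ++ [d]) =
  imgl l ++ [sel E c (last (imgl l) r) (T (tau (hd d l)) (c (last l r) d))].
Proof.
  destruct l as [|w l]; [reflexivity|].
  rewrite <- app_comm_cons. cbn [imgl hd]. rewrite follow_snoc, <- app_comm_cons, !last_cons. reflexivity.
Qed.

Lemma G_root : G r = r.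
Proof. unfold G. rewrite (lp_root Esym Econn Eacyc). reflexivity. Qed.

Lemma hd_snoc (l : list V) d : hd d (l ++ [d]) = hd d l.
Proof. destruct l; reflexivity. Qed.

Lemma KF p d : Par E r p d -> G d = sel E c (G p) (T (tau (br d)) (c p d)).
Proof.
  intros H. unfold G, br. rewrite H, imgl_snoc, last_last, hd_snoc.
  rewrite (lp_last Econn). reflexivity.
Qed.

Lemma br_root d : Par E r r d -> br d = d.
Proof. intros H. unfold br. rewrite H, (lp_root Esym Econn Eacyc). reflexivity. Qed.

Lemma br_par p d : Par E r p d -> p <> r -> br d = br p.
Proof.
  intros H Hp. unfold br. rewrite H, hd_snoc.
  destruct (lp E r p) eqn:Hl; [|reflexivity].
  apply (lp_nil Econn) in Hl. contradiction.
Qed.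

Lemma br_root_child d : d <> r -> Par E r r (br d).
Proof.
  intros Hd. unfold br. pose proof (lp_spec Econn r d) as [W R].
  destruct (lp E r d) as [|w l] eqn:Hl.
  - apply (lp_nil Econn) in Hl. contradiction.
  - simpl. inversion W; subst. apply Par_root; auto.
Qed.

Lemma Q0 : forall d p, Par E r p d -> Inv E isX c (tau (br d)) p d (G p) (G d).
Proof.
  intros d; induction d using (len_ind E r); intros p Hp.
  rename H into IH.
  destruct (classic (p = r)) as [Hpr|Hpr].
  - subst. rewrite (KF Hp), G_root, (br_root Hp).
    assert (Erd : E r d) by (eapply Par_E; eauto).
    destruct (@sel_spec X Y V E c r (T (tau d) (c r d))) as [S1 S2].
    { eapply sel_ex; eauto. tauto. }
    split; [auto| split; [auto| split; [| split]]].
    + eapply side_step; eauto. tauto.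
    + assert (Hd : ~ isX d) by (apply (Hbip Erd); auto).
      destruct (colY Hc d r Hd (Esym Erd)) as [y Hy]. rewrite Hy. simpl.
      rewrite <- Hy. apply (col_const Hc); auto.
    + auto.
  - destruct (Par_exists Esym Econn Eacyc Hpr) as [pp Hpp].
    specialize (IH p (Par_len Hp) pp Hpp).
    rewrite (br_par Hp Hpr). rewrite (KF Hp). rewrite (br_par Hp Hpr).
    eapply step; eauto. apply tau_inj. eapply Par_E; eauto.
    eapply Par_Par_neq; eauto.
Qed.

Lemma Q0b pp p d : Par E r pp p -> Par E r p d -> G d <> G pp.
Proof.
  intros H1 H2. assert (Hpr : p <> r) by (eapply Par_neq_root; eauto).
  pose proof (Q0 H1) as I1. rewrite (KF H2), (br_par H2 Hpr).
  eapply step; eauto. apply tau_inj. eapply Par_E; eauto.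
  eapply Par_Par_neq; eauto.
Qed.

Lemma side_G d : isX (G d) <-> isX d.
Proof.
  destruct (classic (d = r)) as [|Hd]; [subst; rewrite G_root; tauto|].
  destruct (Par_exists Esym Econn Eacyc Hd) as [p Hp].
  destruct (Q0 Hp) as [_ [_ [H _]]]. tauto.
Qed.

Lemma G_edge a b : E a b -> E (G a) (G b).
Proof.
  intros H. destruct (N1 Esym Econn Eacyc r _ _ H) as [Hp|Hp].
  - destruct (Q0 Hp) as [_ [H1 _]]; auto.
  - destruct (Q0 Hp) as [_ [H1 _]]; auto.
Qed.

Lemma G_par : forall d p, Par E r p d -> Par E r (G p) (G d).
Proof.
  intros d; induction d using (len_ind E r); intros p Hp. rename H into IH.
  destruct (classic (p = r)) as [Hpr|Hpr].
  - subst. rewrite G_root. apply Par_root; auto.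
    destruct (Q0 Hp) as [_ [H1 _]]. rewrite G_root in H1; auto.
  - destruct (Par_exists Esym Econn Eacyc Hpr) as [pp Hpp].
    specialize (IH p (Par_len Hp) pp Hpp).
    eapply Par_ext; eauto. destruct (Q0 Hp) as [_ [H1 _]]; auto.
    eapply Q0b; eauto.
Qed.

Lemma br_img : forall d, d <> r -> br (G d) = G (br d).
Proof.
  intros d; induction d using (len_ind E r); intros Hd. rename H into IH.
  destruct (Par_exists Esym Econn Eacyc Hd) as [p Hp].
  pose proof (G_par Hp) as Hg.
  destruct (classic (p = r)) as [Hpr|Hpr].
  - subst. rewrite G_root in Hg. rewrite (br_root Hg), (br_root Hp). auto.
  - destruct (Par_exists Esym Econn Eacyc Hpr) as [pp Hpp].
    pose proof (G_par Hpp) as Hg2.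
    assert (Hgp : G p <> r) by (eapply Par_neq_root; eauto).
    rewrite (br_par Hg Hgp), (br_par Hp Hpr). apply IH; auto. apply Par_len; auto.
Qed.

Lemma T_tau_root w : Par E r r w -> T (tau w) (c r w) = T m (c r w).
Proof. intros _. unfold tau. destruct excluded_middle_informative as [Hf|Hf]; auto.
  rewrite T_id. exact Hf. Qed.

Lemma root_lab w : Par E r r w -> c r (G w) = T m (c r w).
Proof. intros H. destruct (Q0 H) as [_ [_ [_ [_ H5]]]]. rewrite G_root in H5.
  rewrite (br_root H) in H5. rewrite H5. apply T_tau_root; auto. Qed.

Lemma LocX a : isX a -> exists t, (t = (fun x => x) \/ t = m) /\
  forall w x, E a w -> c a w = inl x -> c (G a) (G w) = inl (t x).
Proof.
  intros Ha. destruct (classic (a = r)) as [Har|Har].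
  - subst. exists m. split; auto. intros w x Hw Hx.
    destruct (N1 Esym Econn Eacyc r _ _ Hw) as [Hp|Hp].
    + assert (Hp' : Par E r r w) by auto. rewrite G_root. rewrite (root_lab Hp'), Hx. auto.
    + exfalso. eapply Par_neq_root; eauto.
  - exists (tau (br a)). split. { unfold tau; destruct excluded_middle_informative; auto. }
    intros w x Hw Hx. destruct (N1 Esym Econn Eacyc r _ _ Hw) as [Hp|Hp].
    + destruct (Q0 Hp) as [_ [_ [_ [_ H5]]]]. rewrite H5, (br_par Hp Har), Hx. auto.
    + destruct (Q0 Hp) as [_ [_ [_ [H4 _]]]]. rewrite H4, Hx. auto.
Qed.

Lemma LocY a : ~ isX a -> forall w y, E a w -> c a w = inr y -> c (G a) (G w) = inr y.
Proof.
  intros Ha w y Hw Hy. destruct (N1 Esym Econn Eacyc r _ _ Hw) as [Hp|Hp].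
  + destruct (Q0 Hp) as [_ [_ [_ [_ H5]]]]. rewrite H5, Hy. auto.
  + destruct (Q0 Hp) as [_ [_ [_ [H4 _]]]]. rewrite H4, Hy. auto.
Qed.

Lemma G_fix : forall d, d <> r -> fixb (br d) -> G d = d.
Proof.
  intros d; induction d using (len_ind E r); intros Hd Hf. rename H into IH.
  destruct (Par_exists Esym Econn Eacyc Hd) as [p Hp].
  assert (Ht : tau (br d) = fun x => x).
  { unfold tau; destruct excluded_middle_informative; tauto. }
  rewrite (KF Hp), Ht, T_id.
  destruct (classic (p = r)) as [Hpr|Hpr].
  - subst. rewrite G_root. apply (sel_self Hc). eapply Par_E; eauto.
  - rewrite (IH p (Par_len Hp) Hpr). apply (sel_self Hc). eapply Par_E; eauto.
    rewrite <- (br_par Hp Hpr); auto.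
Qed.

Lemma G_move w : E r w -> ~ fixb w -> G w <> w.
Proof.
  intros Hw Hf Heq. apply Hf. pose proof (root_lab (Par_root Esym Econn Eacyc _ _ Hw)) as H.
  rewrite Heq in H. unfold fixb. rewrite <- H at 1. auto.
Qed.

End Constr.


Section Core.
Variables X Y V : Type.
Variable E : V -> V -> Prop.
Variable isX : V -> Prop.
Variable c : V -> V -> X + Y.
Hypothesis Esym : forall u v, E u v -> E v u.
Hypothesis Econn : forall u v, exists l, walk E u l v.
Hypothesis Eacyc : forall v l, walk E v l v -> reduced (v :: l) -> l = [].
Hypothesis Hinh : inhabited V.
Hypothesis Hbip : forall u w, E u w -> (isX u <-> ~ isX w).
Hypothesis Hc : legal_colouring E isX c.

Lemma PE r p d : Par E r p d -> E p d.
Proof. apply Par_E; auto. Qed.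
Lemma Pext r pp p d : Par E r pp p -> E p d -> d <> pp -> Par E r p d.
Proof. apply Par_ext; auto. Qed.
Lemma Pex r d : d <> r -> exists p, Par E r p d.
Proof. apply Par_exists; auto. Qed.
Lemma Groot r m : G E c r m r = r.
Proof. apply G_root; auto. Qed.

Lemma inj_of (f g : X -> X) : (forall x, g (f x) = x) -> forall a b, f a = f b -> a = b.
Proof. intros H a b Hab. rewrite <- (H a), <- (H b), Hab. auto. Qed.

Lemma inv_G r (Hr : isX r) (f g : X -> X) :
  (forall x, g (f x) = x) -> (forall x, f (g x) = x) ->
  forall d, G E c r g (G E c r f d) = d.
Proof.
  intros H1 H2. assert (Hf := inj_of f g H1). assert (Hg := inj_of g f H2).
  intros d; induction d using (len_ind E r). rename H into IH.
  destruct (classic (d = r)) as [Hd|Hd]; [subst; rewrite !Groot; auto|].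
  destruct (Pex Hd) as [p Hp].
  pose proof (G_par Esym Econn Eacyc Hbip Hc Hr f Hf Hp) as Hgp.
  rewrite (@KF _ _ _ E c Econn r g _ _ Hgp). rewrite (IH p (Par_len Hp)).
  destruct (Q0 Esym Econn Eacyc Hbip Hc Hr f Hf Hp) as [_ [_ [_ [_ H5]]]]. rewrite H5.
  rewrite (br_img Esym Econn Eacyc Hbip Hc Hr f Hf Hd).
  pose proof (br_root_child Esym Econn Eacyc Hd) as Hw. set (w := br E r d) in *.
  assert (Hcomp : forall z : X + Y, T (tau c r g (G E c r f w)) (T (tau c r f w) z) = z).
  { destruct (colX Hc r w Hr (PE Hw)) as [x Hx].
    pose proof (root_lab Esym Econn Eacyc Hbip Hc Hr f Hf Hw) as RL.
    unfold tau.
    destruct (excluded_middle_informative (fixb c r g (G E c r f w))) as [A|A];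
    destruct (excluded_middle_informative (fixb c r f w)) as [B|B];
    unfold fixb in A, B; rewrite RL, Hx in A; rewrite Hx in B; simpl in A, B;
    intros z; destruct z; simpl; auto.
    - exfalso. apply B. rewrite H1 in A. inversion A; subst. congruence.
    - exfalso. apply A. rewrite H1. inversion B. congruence.
    - rewrite H1; auto. }
  rewrite Hcomp. apply (sel_self Hc). apply (PE Hp).
Qed.

Variable m mi : X -> X.
Hypothesis Hmi1 : forall x, mi (m x) = x.
Hypothesis Hmi2 : forall x, m (mi x) = x.
Variable x0 x1 : X.
Hypothesis Hx0 : m x0 = x0.
Hypothesis Hx1 : m x1 <> x1.
Variable y1 y2 : Y.
Hypothesis Hy : y1 <> y2.

Definition Good r (F : list V) :=
  isX r /\ forall f, In f F -> f = r \/ fixb c r m (br E r f).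

Lemma exists_X : exists r, isX r.
Proof.
  destruct Hinh as [a]. destruct (classic (isX a)) as [Ha|Ha]; eauto.
  destruct (col_surjY Hc a y1 Ha) as [w [Hw _]]. exists w.
  pose proof (Hbip Hw). destruct (classic (isX w)); tauto.
Qed.

Lemma stepY r p a : Par E r p a -> ~ isX a -> exists b, Par E r a b /\ isX b.
Proof.
  intros Hp Ha. destruct (colY Hc a p Ha (Esym (PE Hp))) as [y0 Hy0].
  assert (Hyy : exists y, y <> y0).
  { destruct (classic (y1 = y0)); [exists y2; congruence| exists y1; auto]. }
  destruct Hyy as [y Hyy]. destruct (col_surjY Hc a y Ha) as [b [Hb Hcb]].
  exists b. split.
  - eapply Pext; eauto. intro; subst. congruence.
  - pose proof (Hbip Hb). destruct (classic (isX b)); tauto.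
Qed.

Lemma FromX1 r p a : Par E r p a -> isX a -> c a p <> inl x0 ->
  exists u v', Par E r u v' /\ isX v' /\ c v' u = inl x0 /\ Anc E r a u.
Proof.
  intros Hp Ha Hcp. destruct (col_surjX Hc a x0 Ha) as [u [Hu Hcu]].
  assert (Hau : Par E r a u) by (eapply Pext; eauto; intro; subst; auto).
  assert (Hnu : ~ isX u) by (apply (Hbip Hu); auto).
  destruct (stepY Hau Hnu) as [v' [Hv' Hxv']].
  exists u, v'. split; [auto| split; [auto| split]].
  - rewrite <- Hcu. apply (col_const Hc). apply Esym, (PE Hv'). auto.
  - apply Par_Anc; auto.
Qed.

Lemma FromX r p a : Par E r p a -> isX a ->
  exists u v', Par E r u v' /\ isX v' /\ c v' u = inl x0 /\ Anc E r a u.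
Proof.
  intros Hp Ha. destruct (classic (c a p = inl x0)) as [Hcp|Hcp]; [|eapply FromX1; eauto].
  assert (Hx10 : x1 <> x0) by (intro; subst; auto).
  destruct (col_surjX Hc a x1 Ha) as [b [Hb Hcb]].
  assert (Hab : Par E r a b) by (eapply Pext; eauto; intro; subst; congruence).
  assert (Hnb : ~ isX b) by (apply (Hbip Hb); auto).
  destruct (stepY Hab Hnb) as [a2 [Ha2 Hxa2]].
  destruct (@FromX1 r b a2 Ha2 Hxa2) as [u [v' [H1 [H2 [H3 H4]]]]].
  { rewrite (col_const Hc a2 a b (Esym (PE Ha2)) Hb), Hcb. congruence. }
  exists u, v'. repeat split; auto.
  apply Anc_trans with b; [apply Par_Anc; auto|].
  apply Anc_trans with a2; [apply Par_Anc; auto| auto].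
Qed.

Lemma Ext r f : f <> r ->
  exists u v', Par E r u v' /\ isX v' /\ c v' u = inl x0 /\ Anc E r f u.
Proof.
  intros Hf. destruct (Pex Hf) as [p Hp].
  destruct (classic (isX f)) as [Hx|Hx]; [eapply FromX; eauto|].
  destruct (stepY Hp Hx) as [a1 [Ha1 Hxa1]].
  destruct (FromX Ha1 Hxa1) as [u [v' [H1 [H2 [H3 H4]]]]].
  exists u, v'. repeat split; auto. apply Anc_trans with a1; auto. apply Par_Anc; auto.
Qed.

Lemma lp_ne r f : f <> r -> lp E r f <> [].
Proof. intros Hf H. apply Hf. eapply lp_nil; eauto. Qed.

Lemma Good_step r F f : Good r F -> exists r', Good r' (f :: F).
Proof.
  intros [Hr HF].
  destruct (classic (f = r \/ fixb c r m (br E r f))) as [Hf|Hf].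
  { exists r. split; auto. intros t [Ht|Ht]; [subst; auto| auto]. }
  assert (Hfr : f <> r) by tauto.
  assert (Hfb : ~ fixb c r m (br E r f)) by tauto.
  destruct (Ext Hfr) as [u [v' [Huv [Hxv [Hcu [e1 He1]]]]]].
  exists v'. split; auto.
  assert (Hnanc : forall t, In t (f :: F) -> ~ Anc E r v' t).
  { intros t Ht [e He]. unfold Par in Huv. rewrite Huv, He1 in He.
    destruct Ht as [Ht|Ht].
    - subst. assert (Hl := f_equal (@length V) He). rewrite !length_app in Hl. simpl in Hl. lia.
    - destruct (HF t Ht) as [Htr|Htb].
      + subst. rewrite (lp_root Esym Econn Eacyc) in He.
        apply (f_equal (@length V)) in He; rewrite !length_app in He; simpl in He; lia.
      + apply Hfb. unfold br in Htb |- *. rewrite He in Htb.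
        destruct (lp E r f) eqn:Hl; [exfalso; apply (lp_ne Hfr); auto|]. exact Htb. }
  intros t Ht. right.
  destruct (K Esym Econn Eacyc Huv (Hnanc t Ht)) as [rest Hrest].
  unfold br. rewrite Hrest. simpl. unfold fixb. rewrite Hcu. simpl. rewrite Hx0. auto.
Qed.

Lemma Good_exists F : exists r, Good r F.
Proof.
  induction F as [|f F [r Hr]].
  - destruct exists_X as [r Hr]. exists r. split; auto. intros f [].
  - eapply Good_step; eauto.
Qed.

Lemma core F : exists g : V -> V,
  (forall a b, g a = g b -> a = b) /\ (forall d, exists a, g a = d) /\
  (forall a b, E a b <-> E (g a) (g b)) /\ (forall d, isX (g d) <-> isX d) /\
  (forall a, isX a -> exists t, (t = (fun x => x) \/ t = m) /\
       forall w x, E a w -> c a w = inl x -> c (g a) (g w) = inl (t x)) /\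
  (forall a, ~ isX a -> forall w y, E a w -> c a w = inr y -> c (g a) (g w) = inr y) /\
  (forall f, In f F -> g f = f) /\ (exists w, g w <> w).
Proof.
  destruct (Good_exists F) as [r [Hr HF]].
  assert (Hm := inj_of m mi Hmi1). assert (Hmi := inj_of mi m Hmi2).
  exists (G E c r m). split; [|split; [|split; [|split; [|split; [|split; [|split]]]]]].
  - intros a b H. rewrite <- (inv_G Hr m mi Hmi1 Hmi2 a), <- (inv_G Hr m mi Hmi1 Hmi2 b), H. auto.
  - intros d. exists (G E c r mi d). apply (inv_G Hr mi m Hmi2 Hmi1).
  - intros a b. split; [intros H; eapply G_edge; eauto|].
    intros H. eapply (G_edge (isX:=isX)) in H; eauto.
    rewrite !(inv_G Hr m mi Hmi1 Hmi2) in H. auto.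
  - intros d; eapply side_G; eauto.
  - intros a Ha; eapply LocX; eauto.
  - intros a Ha; eapply LocY; eauto.
  - intros f Hf. destruct (HF f Hf) as [Hfr|Hfb]; [subst; apply Groot|].
    destruct (classic (f = r)) as [Hfr|Hfr]; [subst; apply Groot|].
    eapply G_fix; eauto.
  - destruct (col_surjX Hc r x1 Hr) as [w [Hw Hcw]]. exists w.
    eapply G_move; eauto.
    unfold fixb. rewrite Hcw. simpl. intro H; inversion H; auto.
Qed.

End Core.


Definition swp (X Y : Type) (z : X + Y) : Y + X :=
  match z with inl x => inr x | inr y => inl y end.

Lemma swp_inj (X Y : Type) (a b : X + Y) : swp a = swp b -> a = b.
Proof. destruct a, b; simpl; intro H; inversion H; auto. Qed.

Section Main.
Variables X Y V : Type.
Variable E : V -> V -> Prop.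
Variable isX : V -> Prop.
Variable c : V -> V -> X + Y.
Hypothesis Esym : forall u v, E u v -> E v u.
Hypothesis Econn : forall u v, exists l, walk E u l v.
Hypothesis Eacyc : forall v l, walk E v l v -> reduced (v :: l) -> l = [].
Hypothesis Hinh : inhabited V.
Hypothesis Hbip : forall u w, E u w -> (isX u <-> ~ isX w).
Hypothesis Hc : legal_colouring E isX c.
Variable x1 x2 : X.
Hypothesis Hx : x1 <> x2.
Variable y1 y2 : Y.
Hypothesis Hy : y1 <> y2.
Variable M : (X -> X) -> Prop.
Variable N : (Y -> Y) -> Prop.
Hypothesis HM : perm_group M.
Hypothesis HN : perm_group N.

Lemma VY_eq (d1 d2 : VY isX) : proj1_sig d1 = proj1_sig d2 -> d1 = d2.
Proof. destruct d1, d2; simpl; intros; subst; f_equal; apply proof_irrelevance. Qed.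

Lemma transfer (g : V -> V) : (forall a b, E a b -> E (g a) (g b)) ->
  (forall w, ~ isX w -> g w = w) -> forall a, g a = a.
Proof.
  intros Hg Hw a. destruct (classic (isX a)) as [Ha|Ha]; [|auto].
  destruct (col_surjX Hc a x1 Ha) as [b1 [H1 C1]].
  destruct (col_surjX Hc a x2 Ha) as [b2 [H2 C2]].
  assert (Hb : b1 <> b2) by (intro; subst; congruence).
  assert (F1 : g b1 = b1) by (apply Hw; apply (Hbip H1); auto).
  assert (F2 : g b2 = b2) by (apply Hw; apply (Hbip H2); auto).
  symmetry. apply (@common_nb V E Esym Eacyc b1 b2); auto.
  - rewrite <- F1. apply Hg; auto.
  - rewrite <- F2. apply Hg; auto.
Qed.

Lemma from_g (Fd : list (VY isX)) g :
  (forall h, @box_product X Y V E isX c M N h -> (forall d, In d Fd -> h d = d) -> forall d, h d = d) ->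
  @U_c X Y V E isX c M N g -> (forall f, In f (map (@proj1_sig _ _) Fd) -> g f = f) ->
  forall a, g a = a.
Proof.
  intros HD HU Hfix.
  destruct HU as [[Hinj [Hsur Hedge]] [Hside [HlX HlY]]].
  pose (h := fun d : VY isX => exist (fun v => ~ isX v) (g (proj1_sig d))
     (fun H => proj2_sig d (proj1 (Hside _) H))).
  assert (Hb : @box_product X Y V E isX c M N h).
  { exists g. split. { split; [split; [auto|split; auto]|split; [auto|split; auto]]. } intros d0; reflexivity. }
  assert (Hall : forall d, h d = d).
  { apply HD; auto. intros d Hd. apply VY_eq. simpl. apply Hfix.
    apply in_map; auto. }
  apply transfer. { intros a b; apply Hedge. }
  intros w Hw. pose proof (Hall (exist _ w Hw)) as H. apply (f_equal (@proj1_sig _ _)) in H.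
  simpl in H. auto.
Qed.

Lemma perm_id (Z : Type) (K : (Z -> Z) -> Prop) : perm_group K -> K (fun x => x).
Proof. intros [H _]; auto. Qed.

Lemma notsr (Z : Type) (K : (Z -> Z) -> Prop) : ~ semi_regular K ->
  exists m x y, K m /\ m x = x /\ m y <> y.
Proof.
  intros H. unfold semi_regular in H.
  apply not_all_ex_not in H as [m H]. apply not_all_ex_not in H as [x H].
  apply imply_to_and in H as [Hm H]. apply imply_to_and in H as [Hxx H].
  apply not_all_ex_not in H as [y H]. exists m, x, y. auto.
Qed.

Lemma dir1 : discrete_perm_group (@box_product X Y V E isX c M N) -> semi_regular M.
Proof.
  intros [Fd HD]. apply NNPP. intros Hn.
  destruct (notsr Hn) as [m [x0 [x1' [Hm [Hx0 Hx1']]]]].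
  destruct HM as [_ [_ Hinv]]. destruct (Hinv m Hm) as [mi [Hmi [H1 H2]]].
  destruct (@core X Y V E isX c Esym Econn Eacyc Hinh Hbip Hc m mi H2 H1 x0 x1' Hx0 Hx1'
      y1 y2 Hy (map (@proj1_sig _ _) Fd)) as
    [g [Hinj [Hsur [Hedge [Hside [HlX [HlY [Hfix [w Hw]]]]]]]]].
  apply Hw. eapply (from_g Fd); eauto.
  unfold U_c. split; [exact (conj Hinj (conj Hsur Hedge))|split; [exact Hside|split]].
  - intros a Ha. destruct (HlX a Ha) as [t [Ht Hl]]. exists t. split; auto.
    destruct Ht; subst; auto. apply perm_id; auto.
  - intros a Ha. exists (fun y => y). split; [apply perm_id; auto|]. apply HlY; auto.
Qed.

Lemma dir2 : discrete_perm_group (@box_product X Y V E isX c M N) -> semi_regular N.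
Proof.
  intros [Fd HD]. apply NNPP. intros Hn.
  destruct (notsr Hn) as [n [y0 [y1' [Hn' [Hy0 Hy1]]]]].
  destruct HN as [_ [_ Hinv]]. destruct (Hinv n Hn') as [ni [Hni [H1 H2]]].
  set (isX' := fun v => ~ isX v).
  set (c' := fun a b => swp (c a b)).
  assert (Hbip' : forall u w, E u w -> (isX' u <-> ~ isX' w)).
  { intros u w H. pose proof (Hbip H). unfold isX'.
    destruct (classic (isX u)), (classic (isX w)); tauto. }
  assert (Hc' : legal_colouring E isX' c').
  { destruct Hc as [HX [HY HK]]. unfold c', isX'. split; [|split].
    - intros v Hv. destruct (HY v Hv) as [A [B C]]. split; [|split].
      + intros w Hw. destruct (A w Hw) as [y Hy']. exists y. rewrite Hy'; auto.
      + intros w w' Hw Hw' Hcc. apply swp_inj in Hcc. eauto.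
      + intros y. destruct (C y) as [w [Hw Hcw]]. exists w. rewrite Hcw; auto.
    - intros v Hv. apply NNPP in Hv. destruct (HX v Hv) as [A [B C]]. split; [|split].
      + intros w Hw. destruct (A w Hw) as [x Hx']. exists x. rewrite Hx'; auto.
      + intros w w' Hw Hw' Hcc. apply swp_inj in Hcc. eauto.
      + intros x. destruct (C x) as [w [Hw Hcw]]. exists w. rewrite Hcw; auto.
    - intros u u' v H3 H4. f_equal. eauto. }
  destruct (@core Y X V E isX' c' Esym Econn Eacyc Hinh Hbip' Hc' n ni H2 H1 y0 y1' Hy0 Hy1
      x1 x2 Hx (map (@proj1_sig _ _) Fd)) as
    [g [Hinj [Hsur [Hedge [Hside [HlX [HlY [Hfix [w Hw]]]]]]]]].
  apply Hw. eapply (from_g Fd); eauto.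
  unfold U_c. split; [exact (conj Hinj (conj Hsur Hedge))|split; [|split]].
  - intros v. specialize (Hside v). unfold isX' in Hside.
    destruct (classic (isX v)), (classic (isX (g v))); tauto.
  - intros a Ha. exists (fun x => x). split; [apply perm_id; auto|].
    intros w' x Hw' Hcx. assert (Ha' : ~ isX' a) by (unfold isX'; tauto).
    pose proof (HlY a Ha' w' x Hw') as H. unfold c' in H. rewrite Hcx in H.
    specialize (H eq_refl). destruct (c (g a) (g w')); simpl in H; inversion H; auto.
  - intros a Ha. destruct (HlX a Ha) as [t [Ht Hl]]. exists t. split.
    { destruct Ht; subst; auto. apply perm_id; auto. }
    intros w' y Hw' Hcy. pose proof (Hl w' y Hw') as H. unfold c' in H. rewrite Hcy in H.
    specialize (H eq_refl). destruct (c (g a) (g w')); simpl in H; inversion H; auto.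
Qed.

Lemma stepfix g : @U_c X Y V E isX c M N g -> semi_regular M -> semi_regular N ->
  forall a b, g a = a -> E a b -> g b = b -> forall w, E a w -> g w = w.
Proof.
  intros [[_ [_ Hedge]] [_ [HlX HlY]]] SM SN a b Ha Hab Hb w Hw.
  assert (Ew : E a (g w)) by (pose proof (proj1 (Hedge a w) Hw) as HH; rewrite Ha in HH; exact HH).
  destruct (classic (isX a)) as [HXa|HXa].
  - destruct (HlX a HXa) as [m0 [Hm0 Hl]].
    destruct (colX Hc a b HXa Hab) as [xb Hxb].
    pose proof (Hl b xb Hab Hxb) as Hb'. rewrite Ha, Hb, Hxb in Hb'. inversion Hb' as [Hfx].
    destruct (colX Hc a w HXa Hw) as [xw Hxw].
    pose proof (Hl w xw Hw Hxw) as Hw'. rewrite Ha in Hw'.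
    rewrite (SM m0 xb Hm0 (eq_sym Hfx) xw) in Hw'.
    apply (col_inj Hc _ _ _ Ew Hw). congruence.
  - destruct (HlY a HXa) as [m0 [Hm0 Hl]].
    destruct (colY Hc a b HXa Hab) as [xb Hxb].
    pose proof (Hl b xb Hab Hxb) as Hb'. rewrite Ha, Hb, Hxb in Hb'. inversion Hb' as [Hfx].
    destruct (colY Hc a w HXa Hw) as [xw Hxw].
    pose proof (Hl w xw Hw Hxw) as Hw'. rewrite Ha in Hw'.
    rewrite (SN m0 xb Hm0 (eq_sym Hfx) xw) in Hw'.
    apply (col_inj Hc _ _ _ Ew Hw). congruence.
Qed.

Lemma dir3 : semi_regular M -> semi_regular N -> discrete_perm_group (@box_product X Y V E isX c M N).
Proof.
  intros SM SN.
  assert (HXv : exists v, isX v).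
  { destruct Hinh as [a]. destruct (classic (isX a)) as [Ha|Ha]; eauto.
    destruct (col_surjY Hc a y1 Ha) as [w [Hw _]]. exists w.
    pose proof (Hbip Hw). destruct (classic (isX w)); tauto. }
  destruct HXv as [v Hv].
  destruct (col_surjX Hc v x1 Hv) as [w0 [H0 C0]].
  destruct (col_surjX Hc v x2 Hv) as [w1 [H1 C1]].
  assert (Hw01 : w0 <> w1) by (intro; subst; congruence).
  assert (N0 : ~ isX w0) by (apply (Hbip H0); auto).
  assert (N1' : ~ isX w1) by (apply (Hbip H1); auto).
  exists [exist _ w0 N0; exist _ w1 N1'].
  intros h [g [HU Hh]] Hfix d.
  assert (G0 : g w0 = w0).
  { pose proof (Hh (exist _ w0 N0)) as HH; simpl in HH. rewrite <- HH, Hfix; simpl; auto. }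
  assert (G1 : g w1 = w1).
  { pose proof (Hh (exist _ w1 N1')) as HH; simpl in HH. rewrite <- HH, Hfix; simpl; auto. }
  pose proof HU as [[_ [_ Hedge]] _].
  assert (Gv : g v = v).
  { symmetry. apply (@common_nb V E Esym Eacyc w0 w1); auto.
    - rewrite <- G0 at 1. apply (proj1 (Hedge _ _)). auto.
    - rewrite <- G1 at 1. apply (proj1 (Hedge _ _)). auto. }
  assert (Hprop : forall l a e, walk E a l e -> g a = a -> (exists b, E a b /\ g b = b) -> g e = e).
  { intros l a e W. induction W as [a|a b l e Hab W IH]; auto.
    intros Ga [b' [Hb' Gb']]. assert (Gb : g b = b) by (eapply stepfix; [exact HU|exact SM|exact SN|exact Ga|exact Hb'|exact Gb'|exact Hab]).
    apply IH; auto. exists a; auto. }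
  apply VY_eq. rewrite Hh. destruct (Econn v (proj1_sig d)) as [l W].
  apply (Hprop l v); auto. exists w0; auto.
Qed.

End Main.

Theorem theorem6p4 (X Y V : Type) (E : V -> V -> Prop) (isX : V -> Prop)
  (c : V -> V -> X + Y) (M : (X -> X) -> Prop) (N : (Y -> Y) -> Prop) :
  (exists x1 x2 : X, x1 <> x2) ->
  (exists y1 y2 : Y, y1 <> y2) ->
  biregular_tree X Y E isX ->
  @legal_colouring X Y V E isX c ->
  perm_group M -> perm_group N ->
  nontrivial_group M -> nontrivial_group N ->
  (discrete_perm_group (@box_product X Y V E isX c M N) <->
   (semi_regular M /\ semi_regular N)).
Proof.
  intros [x1 [x2 Hx]] [y1 [y2 Hy]] [[Esym [_ [Hinh [Econn Eacyc]]]] [Hbip _]] Hc HM HN _ _.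
  split.
  - intros HD. split.
    + eapply dir1; eauto.
    + eapply dir2; eauto.
  - intros [SM SN]. eapply dir3; eauto.
Qed.
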